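(* Let $n\ge 2$, inputs $s_j\in\mathbb{Z}_{c_j}$, outputs in $\mathbb{Z}_d$ with $d$ prime, and let $f$ be a function that is not bipartite linear. Then the vertex $p(k|\mathbf{s})=\delta^k_{f(\mathbf{s})}$ of $\mathcal{P}$ is produced by exactly one non-signalling distribution, and this distribution is a vertex of the non-signalling polytope $\mathcal{NS}$.
   Context: Correlator of $p(\mathbf{m}|\mathbf{s})$: $p(k|\mathbf{s})=\sum_{\mathbf{m}:[\sum_j m_j]_d=k}p(\mathbf{m}|\mathbf{s})$; a distribution ''produces'' a correlator if this holds. $\mathcal{P}$ is the polytope of all correlator families. Non-signalling: for every subset $\mathcal{J}$ and inputs $\mathbf{s},\mathbf{s}'$ agreeing outside $\mathcal{J}$, $\sum_{(m_j)_{j\in\mathcal{J}}}p(\mathbf{m}|\mathbf{s})=\sum_{(m_j)_{j\in\mathcal{J}}}p(\mathbf{m}|\mathbf{s}')$; $\mathcal{NS}$ is the polytope of all non-signalling conditional distributions. A function $f$ is bipartite linear if for some nonempty proper $\mathcal{J}\subset\{1,\dots,n\}$ there are functions $f^1$ of $(s_j)_{j\in\mathcal{J}}$ and $f^2$ of $(s_j)_{j\notin\mathcal{J}}$ into $\mathbb{Z}_d$ with $f=[f^1+f^2]_d$. *)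

(* Defs.v *)
From HB Require Import structures.
From mathcomp Require Import all_boot all_order all_algebra.
From mathcomp Require Import reals.
Set Implicit Arguments. Unset Strict Implicit. Unset Printing Implicit Defensive.
Import Order.TTheory GRing.Theory Num.Theory.
Local Open Scope ring_scope.

(* Parties are indexed by 'I_n; party j has input s_j in Z_{c j} (= 'I_(c j))
   and output m_j in Z_d (= 'I_d, arithmetic taken mod d). *)
Definition Inp (n : nat) (c : 'I_n -> nat) : finType :=
  {dffun forall j : 'I_n, 'I_(c j)}.
Definition Outp (n d : nat) : finType := {ffun 'I_n -> 'I_d}.

Definition outsum (n d : nat) (m : Outp n d) : nat :=
  ((\sum_(j < n) (m j : nat)) %% d)%N.

(* A conditional distribution p(m|s) is written p s m. *)
Definition cond_distr (R : realType) (n d : nat) (c : 'I_n -> nat)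
  (p : Inp c -> Outp n d -> R) : Prop :=
  (forall s m, 0 <= p s m) /\ (forall s, \sum_(m : Outp n d) p s m = 1).

Definition non_signalling (R : realType) (n d : nat) (c : 'I_n -> nat)
  (p : Inp c -> Outp n d -> R) : Prop :=
  forall (J : {set 'I_n}) (s s' : Inp c),
    (forall j, j \notin J -> s j = s' j) ->
    forall m : Outp n d,
      \sum_(m' : Outp n d | [forall j, (j \notin J) ==> (m' j == m j)]) p s m'
      = \sum_(m' : Outp n d | [forall j, (j \notin J) ==> (m' j == m j)]) p s' m'.

Definition in_NS (R : realType) (n d : nat) (c : 'I_n -> nat)
  (p : Inp c -> Outp n d -> R) : Prop :=
  cond_distr p /\ non_signalling p.

Definition produces (R : realType) (n d : nat) (c : 'I_n -> nat)
  (p : Inp c -> Outp n d -> R) (P : Inp c -> 'I_d -> R) : Prop :=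
  forall (s : Inp c) (k : 'I_d),
    P s k = \sum_(m : Outp n d | outsum m == k) p s m.

Definition delta_corr (R : realType) (n d : nat) (c : 'I_n -> nat)
  (f : Inp c -> 'I_d) : Inp c -> 'I_d -> R :=
  fun s k => (k == f s)%:R.

Definition vertex_NS (R : realType) (n d : nat) (c : 'I_n -> nat)
  (p : Inp c -> Outp n d -> R) : Prop :=
  in_NS p /\
  forall (q1 q2 : Inp c -> Outp n d -> R) (t : R),
    in_NS q1 -> in_NS q2 -> 0 < t < 1 ->
    (forall s m, p s m = t * q1 s m + (1 - t) * q2 s m) ->
    forall s m, q1 s m = q2 s m.

Definition bipartite_linear (n d : nat) (c : 'I_n -> nat) (f : Inp c -> 'I_d)
  : Prop :=
  exists (J : {set 'I_n}) (f1 f2 : Inp c -> 'I_d),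
    [/\ J != set0, J != setT,
        (forall s s' : Inp c, (forall j, j \in J -> s j = s' j) -> f1 s = f1 s'),
        (forall s s' : Inp c, (forall j, j \notin J -> s j = s' j) -> f2 s = f2 s')
      & (forall s, (f s : nat) = ((f1 s + f2 s) %% d)%N)].

(* Main.v *)
Require Import Defs.
From HB Require Import structures.
From mathcomp Require Import all_boot all_order all_algebra.
From mathcomp Require Import reals ring.
Import Order.TTheory GRing.Theory Num.Theory.
Local Open Scope ring_scope.
Set Implicit Arguments. Unset Strict Implicit.

Definition mix (n : nat) (c : 'I_n -> nat) (s s' : Inp c) (S : {set 'I_n}) : Inp c :=
  [ffun i => if i \in S then s' i else s i].

Lemma mixE (n : nat) (c : 'I_n -> nat) (s s' : Inp c) S i :
  mix s s' S i = if i \in S then s' i else s i.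
Proof. by rewrite ffunE. Qed.

Lemma invariance (n : nat) (c : 'I_n -> nat) (X : Type) (g : Inp c -> X) (J : {set 'I_n}) :
  (forall (s s' : Inp c) j, j \notin J -> (forall i, i != j -> s i = s' i) -> g s = g s') ->
  forall s s' : Inp c, (forall j, j \in J -> s j = s' j) -> g s = g s'.
Proof.
move=> H s s' E.
have step : forall r : seq 'I_n, all (fun i => i \notin J) r ->
    g s = g (mix s s' [set i | i \in r]).
  elim=> [|x r IH] /=.
    by move=> _; congr g; apply/ffunP=> i; rewrite mixE inE.
  move=> /andP[xJ rJ]; rewrite (IH rJ); apply: (H _ _ x xJ) => i ix.
  rewrite !mixE !inE; case: (i \in r) => //; by rewrite (negbTE ix).
have -> : s' = mix s s' [set i | i \in enum (~: J)].
  apply/ffunP=> i; rewrite mixE inE mem_enum inE.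
  by case: (boolP (i \in J)) => // /E.
by apply: step; apply/allP=> i; rewrite mem_enum inE.
Qed.


Lemma Zunit (d' : nat) (u : 'I_d'.+2) : prime d'.+2 -> u != 0 -> u \is a GRing.unit.
Proof.
move=> pr u0.
have -> : u = (u : nat)%:R :> 'I_d'.+2 by rewrite natr_Zp.
rewrite (@unitZpE d'.+2) // prime_coprime //; apply/negP => /dvdn_leq.
have : (0 < u)%N by rewrite lt0n; apply: contra u0 => /eqP h; apply/eqP/val_inj.
move=> up /(_ up); by rewrite leqNgt ltn_ord.
Qed.

Lemma Zdomain (d' : nat) (x y : 'I_d'.+2) : prime d'.+2 -> x != 0 -> x * y = 0 -> y = 0.
Proof.
move=> pr x0 h; have := Zunit pr x0 => xu.
by rewrite -(mulKr xu y) h mulr0.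
Qed.

Lemma Zstab (R : realType) (d' : nat) (mu : 'I_d'.+2 -> R) (u : 'I_d'.+2) :
  prime d'.+2 -> u != 0 -> (forall y, mu (y + u) = mu y) -> forall y, mu y = mu 0.
Proof.
move=> pr u0 H y.
have K : forall k y, mu (y + u *+ k) = mu y.
  elim=> [|k IH] z; first by rewrite mulr0n addr0.
  by rewrite mulrSr addrA H IH.
have := K (y * u^-1 : 'I_d'.+2) 0.
by rewrite -mulr_natr natr_Zp mulrCA mulrV ?Zunit // mulr1 add0r.
Qed.

Definition sumZ (n d' : nat) (m : Outp n d'.+2) : 'I_d'.+2 := \sum_j m j.

Lemma outsumE (n d' : nat) (m : Outp n d'.+2) : outsum m = sumZ m.
Proof.
rewrite /outsum /sumZ.
apply: (big_rec2 (fun (x : nat) (y : 'I_d'.+2) => x %% d'.+2 = y)%N).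
  by rewrite mod0n.
by move=> i x y _ IH; rewrite /= -modnDmr IH.
Qed.


Definition dot (n d' : nat) (a m : Outp n d'.+2) : 'I_d'.+2 := \sum_j a j * m j.

Definition mu (R : realType) (n d' : nat) (c : 'I_n -> nat)
  (p : Inp c -> Outp n d'.+2 -> R) (a : Outp n d'.+2) (s : Inp c) (y : 'I_d'.+2) : R :=
  \sum_(m : Outp n d'.+2 | dot a m == y) p s m.

Definition shift (n d' : nat) (a : Outp n d'.+2) (v : 'I_d'.+2) : Outp n d'.+2 :=
  [ffun j => a j - v].

Lemma dot_shift (n d' : nat) (a m : Outp n d'.+2) v :
  dot (shift a v) m = dot a m - v * sumZ m.
Proof.
rewrite /dot /sumZ mulr_sumr -sumrB; apply: eq_bigr => i _.
by rewrite ffunE mulrBl.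
Qed.

Lemma sum_supp (R : realType) (T : finType) (F : T -> R) (P P' : pred T) :
  (forall m, F m != 0 -> P m = P' m) -> \sum_(m | P m) F m = \sum_(m | P' m) F m.
Proof.
move=> H; rewrite big_mkcond [RHS]big_mkcond; apply: eq_bigr => m _.
case: (boolP (F m == 0)) => [/eqP ->|/H ->]; first by case: ifP; case: ifP.
done.
Qed.

Definition supp_ok (R : realType) (n d' : nat) (c : 'I_n -> nat)
  (p : Inp c -> Outp n d'.+2 -> R) (f : Inp c -> 'I_d'.+2) : Prop :=
  forall s m, sumZ m != f s -> p s m = 0.

Lemma mu_shift (R : realType) (n d' : nat) (c : 'I_n -> nat)
  (p : Inp c -> Outp n d'.+2 -> R) (f : Inp c -> 'I_d'.+2) (a : Outp n d'.+2) s y v :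
  supp_ok p f -> mu p a s y = mu p (shift a v) s (y - v * f s).
Proof.
move=> H; apply: sum_supp => m pm.
have e : sumZ m = f s by apply/eqP; apply: contraR pm => /H ->.
rewrite dot_shift e; apply/eqP/eqP => [->|/(congr1 (fun x => x + v * f s))]//.
by rewrite !subrK.
Qed.

Lemma mu_NS (R : realType) (n d' : nat) (c : 'I_n -> nat)
  (p : Inp c -> Outp n d'.+2 -> R) (a : Outp n d'.+2) (s s' : Inp c) y :
  non_signalling p -> (forall j, a j != 0 -> s j = s' j) -> mu p a s y = mu p a s' y.
Proof.
move=> NS E.
pose J := [set j | a j == 0].
pose pi (m : Outp n d'.+2) : Outp n d'.+2 := [ffun i => if a i == 0 then 0 else m i].
have dpi : forall m, dot a (pi m) = dot a m.
  move=> m; apply: eq_bigr => i _; rewrite ffunE; case: eqP => [->|]; by rewrite ?mul0r.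
have part : forall s0, mu p a s0 y = \sum_(m0 | (dot a m0 == y) && (pi m0 == m0))
     \sum_(m : Outp n d'.+2 | [forall j, (j \notin J) ==> (m j == m0 j)]) p s0 m.
  move=> s0; rewrite /mu (partition_big pi (fun m0 => (dot a m0 == y) && (pi m0 == m0))).
    apply: eq_bigr => m0 /andP[e1 /eqP e2]; apply: eq_bigl => m.
    apply/andP/forallP => [[_ /eqP <-] j|H].
      by apply/implyP; rewrite inE ffunE => /negbTE ->.
    have pe : pi m = m0.
      apply/ffunP=> i; rewrite -e2 !ffunE; case: ifP => // /negbT ai.
      by have := H i; rewrite inE ai => /eqP.
    by rewrite -dpi pe e1 -pe.
  move=> m /eqP e; rewrite dpi e eqxx /=; apply/eqP/ffunP=> i; rewrite !ffunE.
  by case: (a i == 0).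
rewrite !part; apply: eq_bigr => m0 _; apply: NS => j; rewrite inE; exact: E.
Qed.


Lemma valZD (d' : nat) (x y : 'I_d'.+2) : val (x + y) = ((val x + val y) %% d'.+2)%N.
Proof. by []. Qed.

Lemma mu_single (R : realType) (n d' : nat) (c : 'I_n -> nat)
  (p : Inp c -> Outp n d'.+2 -> R) (f : Inp c -> 'I_d'.+2) (a : Outp n d'.+2)
  (s s' : Inp c) j :
  supp_ok p f -> non_signalling p -> (forall i, i != j -> s i = s' i) ->
  forall y, mu p a s' y = mu p a s (y + a j * (f s - f s')).
Proof.
move=> sp NS E y.
rewrite (mu_shift a s' y (a j) sp) (mu_NS (s' := s) _ NS).
  rewrite [in RHS](mu_shift a s _ (a j) sp); congr mu; ring.
move=> i; rewrite ffunE; case: (eqVneq i j) => [->|ij]; first by rewrite subrr eqxx.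
by move=> _; rewrite E.
Qed.

Lemma shift_const (R : realType) (d' : nat) (F F' : 'I_d'.+2 -> R) e :
  (forall y, F' y = F (y + e)) -> (forall y, F y = F 0) -> (forall y, F' y = F' 0).
Proof. by move=> H K y; rewrite !H K [RHS]K. Qed.


Lemma Dplus (R : realType) (n d' : nat) (c : 'I_n -> nat)
  (p : Inp c -> Outp n d'.+2 -> R) (f : Inp c -> 'I_d'.+2) (a : Outp n d'.+2) :
  prime d'.+2 -> supp_ok p f -> non_signalling p ->
  (forall s u, (forall y, mu p a s (y + u) = mu p a s y) -> u = 0) ->
  forall (z w : Inp c) j k, a j != a k ->
  f z - f (mix z w [set j]) - f (mix z w [set k]) + f (mix z w [set j; k]) = 0.
Proof.
move=> pr sp NS stab z w j k ajk.
have jk : j != k by apply: contraNneq ajk => ->.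
set s1 := mix z w [set j]; set s2 := mix z w [set k]; set s12 := mix z w [set j; k].
have r1 : forall y, mu p a s12 y = mu p a s1 (y + a k * (f s1 - f s12)).
  apply: mu_single => // i ik; rewrite !mixE !inE (negbTE ik) orbF.
  by case: (i == j).
have r2 : forall y, mu p a s1 y = mu p a z (y + a j * (f z - f s1)).
  apply: mu_single => // i ij; by rewrite !mixE !inE (negbTE ij).
have r3 : forall y, mu p a s12 y = mu p a s2 (y + a j * (f s2 - f s12)).
  apply: mu_single => // i ij; rewrite !mixE !inE (negbTE ij) /=.
  by case: (i == k).
have r4 : forall y, mu p a s2 y = mu p a z (y + a k * (f z - f s2)).
  apply: mu_single => // i ik; by rewrite !mixE !inE (negbTE ik).
set e1 := a k * (f s1 - f s12) + a j * (f z - f s1).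
set e2 := a j * (f s2 - f s12) + a k * (f z - f s2).
have u0 : e2 - e1 = 0.
  apply: (stab z) => y.
  have := r1 (y - e1); rewrite r2 r3 r4.
  have -> : y - e1 + a k * (f s1 - f s12) + a j * (f z - f s1) = y by rewrite /e1; ring.
  move=> <-; congr mu; rewrite /e1 /e2; ring.
have : (a j - a k) * (f s1 + f s2 - f z - f s12) = 0.
  by rewrite -u0 /e1 /e2; ring.
move/(Zdomain pr); rewrite subr_eq0 => /(_ ajk) h.
apply/eqP; rewrite -oppr_eq0 -h; apply/eqP; ring.
Qed.


Lemma bip (n d' : nat) (c : 'I_n -> nat) (f : Inp c -> 'I_d'.+2)
  (J : {set 'I_n}) (s0 : Inp c) :
  J != set0 -> J != setT ->
  (forall (z w : Inp c) j k, j \in J -> k \notin J ->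
     f z - f (mix z w [set j]) - f (mix z w [set k]) + f (mix z w [set j; k]) = 0) ->
  bipartite_linear f.
Proof.
move=> J0 JT DP.
pose r (z : Inp c) := mix s0 z J.
pose g (z : Inp c) := f z - f (r z).
have ginv : forall z z' : Inp c, (forall i, i \in ~: J -> z i = z' i) -> g z = g z'.
  apply: invariance => z z' j; rewrite inE negbK => jJ E.
  pose h (x : Inp c) := f x - f (mix x z' [set j]).
  have hinv : forall x x' : Inp c, (forall i, i \in J -> x i = x' i) -> h x = h x'.
    apply: invariance => x x' k kJ Ek.
    have jk : k != j by apply: contraNneq kJ => ->.
    have := DP x (mix x' z' [set j]) j k jJ kJ.
    have -> : mix x (mix x' z' [set j]) [set j] = mix x z' [set j].
      by apply/ffunP=> i; rewrite !mixE !inE; case: (i == j).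
    have -> : mix x (mix x' z' [set j]) [set k] = x'.
      apply/ffunP=> i; rewrite !mixE !inE; case: (eqVneq i k) => [?|ik].
        by subst i; rewrite (negbTE jk).
      by rewrite Ek.
    have -> : mix x (mix x' z' [set j]) [set j; k] = mix x' z' [set j].
      apply/ffunP=> i; rewrite !mixE !inE; case: (eqVneq i j) => //= ij.
      case: (eqVneq i k) => [?|ik] /=; first by subst i.
      by rewrite Ek.
    move=> H; rewrite /h; apply/eqP; rewrite -subr_eq0 -H; apply/eqP; ring.
  have := hinv z (r z) (fun i iJ => ltac:(by rewrite mixE iJ)). rewrite /h.
  have -> : mix z z' [set j] = z'.
    apply/ffunP=> i; rewrite mixE inE; case: (eqVneq i j) => [?|ij] //.
    by rewrite E.
  have -> : mix (r z) z' [set j] = r z'.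
    apply/ffunP=> i; rewrite !mixE !inE; case: (eqVneq i j) => [?|ij] /=.
      by subst i; rewrite jJ.
    by case: ifP => // _; rewrite E.
  move=> H; rewrite /g; apply/eqP; rewrite -subr_eq0; apply/eqP.
  transitivity ((f z - f z') - (f (r z) - f (r z'))); first ring.
  by rewrite H subrr.
exists J, (fun s => f (mix s0 s J)), (fun s => f (mix s0 s (~: J)) - f s0).
split=> //.
- move=> s s' E /=; congr f; apply/ffunP=> i; rewrite !mixE; case: ifP => // /E ->//.
- move=> s s' E /=; congr (f _ - _); apply/ffunP=> i; rewrite !mixE inE; case: ifP => // /E ->//.
move=> s; rewrite -valZD; congr val.
have := ginv s (mix s0 s (~: J)) (fun i iJ => ltac:(by rewrite mixE iJ)). rewrite /g.
have -> : r (mix s0 s (~: J)) = s0.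
  apply/ffunP=> i; rewrite !mixE inE. by case: (i \in J).
move=> H; apply/eqP; rewrite -subr_eq0; apply/eqP.
transitivity (f s - f (r s) - (f (mix s0 s (~: J)) - f s0)); first ring.
by rewrite H subrr.
Qed.


Lemma uniform (R : realType) (n d' : nat) (c : 'I_n -> nat)
  (p : Inp c -> Outp n d'.+2 -> R) (f : Inp c -> 'I_d'.+2) (a : Outp n d'.+2) :
  prime d'.+2 -> supp_ok p f -> non_signalling p -> ~ bipartite_linear f ->
  (exists j k, a j != a k) -> forall s y, mu p a s y = mu p a s 0.
Proof.
move=> pr sp NS nb [j0 [k0 ajk]].
case: (boolP [forall s, [forall y, mu p a s y == mu p a s 0]]) => [/forallP H s y|].
  by have /forallP/(_ y)/eqP := H s.
move/forallPn => [s0 /forallPn [y0 ny]]; exfalso.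
have nc : forall s, ~~ [forall y, mu p a s y == mu p a s 0].
  move=> s.
  have <- : [forall y, mu p a s0 y == mu p a s0 0] = [forall y, mu p a s y == mu p a s 0].
    apply: (@invariance _ _ _ (fun s => [forall y, mu p a s y == mu p a s 0]) set0);
      last by move=> ?; rewrite inE.
    move=> z z' j _ E.
    have E' : forall i, i != j -> z' i = z i by move=> i /E ->.
    have r1 := mu_single a sp NS E; have r2 := mu_single a sp NS E'.
    apply/idP/idP => /forallP H; apply/forallP => y; apply/eqP.
      by apply: (shift_const r1) => x; apply/eqP.
    by apply: (shift_const r2) => x; apply/eqP.
  by apply/forallPn; exists y0.
have stab : forall s u, (forall y, mu p a s (y + u) = mu p a s y) -> u = 0.
  move=> s u H; apply/eqP; apply: contraNT (nc s) => u0; apply/forallP => y.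
  by apply/eqP; exact: Zstab pr u0 H y.
apply: nb; apply: (@bip _ _ _ _ [set i | a i == a j0] s0).
- by apply/set0Pn; exists j0; rewrite inE.
- apply/eqP => h; have : k0 \in [set i | a i == a j0] by rewrite h inE.
  by rewrite inE eq_sym (negbTE ajk).
move=> z w j k; rewrite !inE => /eqP aj ak.
by apply: (Dplus pr sp NS stab); rewrite aj eq_sym.
Qed.


Definition ek (n d' : nat) (k : 'I_n) (u : 'I_d'.+2) : Outp n d'.+2 :=
  [ffun i => if i == k then u else 0].

Lemma dot_ek (n d' : nat) (a z : Outp n d'.+2) k u :
  dot (a + ek k u) z = dot a z + u * z k.
Proof.
rewrite /dot (eq_bigr (fun j => a j * z j + ek k u j * z j)); last first.
  by move=> i _; rewrite ffunE mulrDl.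
rewrite big_split /=; congr (_ + _).
rewrite (bigD1 k) //= ffunE eqxx big1 ?addr0 // => i ik.
by rewrite ffunE (negbTE ik) mul0r.
Qed.

Lemma fiber (R : realType) (n d' : nat) (P : pred (Outp n d'.+2)) (z : Outp n d'.+2) k t t' :
  prime d'.+2 -> z k != 0 -> (forall a u, P (a + ek k u) = P a) ->
  \sum_(a | P a) ((dot a z == t)%:R : R) = \sum_(a | P a) ((dot a z == t')%:R : R).
Proof.
move=> pr zk HP.
pose u := (t' - t) * (z k)^-1.
rewrite [RHS](reindex_inj (addIr (ek k u))) /=.
apply: eq_big => [a|a _]; first by rewrite HP.
rewrite dot_ek /u mulrVK ?Zunit //.
by rewrite -opprB subr_eq addrC subrK.
Qed.

Lemma count_fiber (R : realType) (n d' : nat) (P : pred (Outp n d'.+2)) (z : Outp n d'.+2) k t :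
  prime d'.+2 -> z k != 0 -> (forall a u, P (a + ek k u) = P a) ->
  (d'.+2)%:R * \sum_(a | P a) ((dot a z == t)%:R : R) = \sum_(a | P a) (1 : R).
Proof.
move=> pr zk HP.
have -> : (d'.+2)%:R * \sum_(a | P a) ((dot a z == t)%:R : R) =
    \sum_(t0 : 'I_d'.+2) \sum_(a | P a) ((dot a z == t0)%:R : R).
  transitivity (\sum_(t0 : 'I_d'.+2) \sum_(a | P a) ((dot a z == t)%:R : R)).
    by rewrite [RHS]sumr_const card_ord mulr_natl.
  apply: eq_bigr => t0 _; exact: (@fiber R n d' P z k t t0 pr zk HP).
rewrite exchange_big /=; apply: eq_bigr => a _.
by rewrite (bigD1 (dot a z)) //= eqxx big1 ?addr0 // => t0 /negbTE; rewrite eq_sym => ->.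
Qed.


Lemma dotB (n d' : nat) (a m m0 : Outp n d'.+2) : dot a (m - m0) = dot a m - dot a m0.
Proof.
rewrite /dot -sumrB; apply: eq_bigr => i _; by rewrite !ffunE mulrBr.
Qed.

Lemma sum_one (R : realType) (n d' : nat) :
  \sum_(a : Outp n d'.+2) (1 : R) = (d'.+2 ^ n)%:R.
Proof. by rewrite sumr_const card_ffun !card_ord. Qed.

Lemma Ncount (R : realType) (n d' : nat) (m m0 : Outp n d'.+2) : prime d'.+2 ->
  (d'.+2)%:R * \sum_(a : Outp n d'.+2) ((dot a m == dot a m0)%:R : R) =
  (d'.+2 ^ n)%:R + (m == m0)%:R * ((d'.+2 ^ n.+1)%:R - (d'.+2 ^ n)%:R).
Proof.
move=> pr; case: (eqVneq m m0) => [->|mm].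
  rewrite (eq_bigr (fun _ => 1)) ?sum_one => [|a _]; last by rewrite eqxx.
  by rewrite expnS natrM mul1r addrC subrK.
have [k zk] : exists k, (m - m0) k != 0.
  case: (pickP (fun k => (m - m0) k != 0)) => [k zk|H]; first by exists k.
  case/eqP: mm; apply/ffunP => i; have := H i; rewrite !ffunE /= => /negbFE.
  by rewrite subr_eq0 => /eqP.
rewrite (eq_bigr (fun a => ((dot a (m - m0) == 0)%:R : R))); last first.
  by move=> a _; rewrite dotB subr_eq0.
rewrite (@count_fiber R n d' predT (m - m0) k 0 pr zk) // sum_one.
by rewrite mul0r addr0.
Qed.

Lemma recover (R : realType) (n d' : nat) (c : 'I_n -> nat)
  (p : Inp c -> Outp n d'.+2 -> R) s (m0 : Outp n d'.+2) :
  prime d'.+2 -> \sum_(m : Outp n d'.+2) p s m = 1 ->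
  (d'.+2)%:R * \sum_(a : Outp n d'.+2) mu p a s (dot a m0) =
  (d'.+2 ^ n)%:R + p s m0 * ((d'.+2 ^ n.+1)%:R - (d'.+2 ^ n)%:R).
Proof.
move=> pr S1.
have E : \sum_(a : Outp n d'.+2) mu p a s (dot a m0) =
    \sum_(m : Outp n d'.+2) p s m * \sum_(a : Outp n d'.+2) ((dot a m == dot a m0)%:R : R).
  rewrite /mu (eq_bigr (fun a => \sum_(m : Outp n d'.+2) (dot a m == dot a m0)%:R * p s m)); last first.
    move=> a _; rewrite big_mkcond; apply: eq_bigr => m _.
    by case: eqP; rewrite ?mul1r ?mul0r.
  rewrite exchange_big; apply: eq_bigr => m _; rewrite mulr_sumr.
  by apply: eq_bigr => a _; rewrite mulrC.
rewrite E mulr_sumr (eq_bigr (fun m => p s m * ((d'.+2 ^ n)%:R +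
     (m == m0)%:R * ((d'.+2 ^ n.+1)%:R - (d'.+2 ^ n)%:R)))); last first.
  by move=> m _; rewrite mulrCA Ncount.
rewrite (eq_bigr (fun m => p s m * (d'.+2 ^ n)%:R +
     p s m * (m == m0)%:R * ((d'.+2 ^ n.+1)%:R - (d'.+2 ^ n)%:R))); last first.
  by move=> m _; rewrite mulrDr mulrA.
rewrite big_split /= -mulr_suml S1 mul1r -mulr_suml; congr (_ + _ * _).
rewrite (bigD1 m0) //= eqxx mulr1 big1 ?addr0 // => m /negbTE ->.
by rewrite mulr0.
Qed.


Lemma outsum_eq (n d' : nat) (m : Outp n d'.+2) (k : 'I_d'.+2) :
  (outsum m == k) = (sumZ m == k).
Proof. by rewrite outsumE val_eqE. Qed.

Lemma supp_of_prod (R : realType) (n d' : nat) (c : 'I_n -> nat)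
  (p : Inp c -> Outp n d'.+2 -> R) (f : Inp c -> 'I_d'.+2) :
  cond_distr p -> produces p (delta_corr R f) -> supp_ok p f.
Proof.
move=> [pos _] pr s m mf.
have := pr s (sumZ m); rewrite /delta_corr (negbTE mf) => /esym/psumr_eq0P.
by apply; [move=> m' _; exact: pos | rewrite outsum_eq].
Qed.

Lemma prod_of_supp (R : realType) (n d' : nat) (c : 'I_n -> nat)
  (p : Inp c -> Outp n d'.+2 -> R) (f : Inp c -> 'I_d'.+2) :
  cond_distr p -> supp_ok p f -> produces p (delta_corr R f).
Proof.
move=> [pos S1] sp s k; rewrite /delta_corr.
case: (eqVneq k (f s)) => [->|kf] /=.
  rewrite -(S1 s); apply: sum_supp => m pm; rewrite outsum_eq.
  by symmetry; apply: contraR pm => /sp ->.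

rewrite big1 // => m; rewrite outsum_eq => /eqP mk; apply: sp.
by rewrite mk.
Qed.

Lemma sum_mu (R : realType) (n d' : nat) (c : 'I_n -> nat)
  (p : Inp c -> Outp n d'.+2 -> R) a s :
  \sum_(y : 'I_d'.+2) mu p a s y = \sum_(m : Outp n d'.+2) p s m.
Proof.
by rewrite [RHS](partition_big (fun m => dot a m) predT).
Qed.

Lemma mu_const (R : realType) (n d' : nat) (c : 'I_n -> nat)
  (p : Inp c -> Outp n d'.+2 -> R) (f : Inp c -> 'I_d'.+2) (a : Outp n d'.+2) i0 s y :
  cond_distr p -> supp_ok p f -> (forall j, a j = a i0) ->
  mu p a s y = (a i0 * f s == y)%:R.
Proof.
move=> [_ S1] sp H.
rewrite /mu (@sum_supp _ _ _ _ (fun _ => a i0 * f s == y)).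
  by case: (a i0 * f s == y); rewrite ?S1 ?big_pred0.
move=> m pm.
have e : sumZ m = f s by apply/eqP; apply: contraR pm => /sp ->.
rewrite -e /dot /sumZ mulr_sumr; congr (_ == _); apply: eq_bigr => j _.
by rewrite H.
Qed.

Lemma uniq_NS (R : realType) (n d' : nat) (c : 'I_n -> nat)
  (p q : Inp c -> Outp n d'.+2 -> R) (f : Inp c -> 'I_d'.+2) :
  (0 < n)%N -> prime d'.+2 -> ~ bipartite_linear f ->
  in_NS p -> produces p (delta_corr R f) ->
  in_NS q -> produces q (delta_corr R f) -> forall s m, p s m = q s m.
Proof.
move=> n0 pr nb [cp NSp] prp [cq NSq] prq s m0.
have spp := supp_of_prod cp prp; have spq := supp_of_prod cq prq.
have Dn0 : (d'.+2)%:R != 0 :> R by rewrite pnatr_eq0.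
have mueq : forall a y, mu p a s y = mu q a s y.
  move=> a y.
  case: (boolP [exists j, exists k, a j != a k]) => [/existsP[j /existsP[k ajk]]|].
    have ex : exists j k, a j != a k by exists j, k.
    have up := uniform pr spp NSp nb ex; have uq := uniform pr spq NSq nb ex.
    rewrite up uq; apply: (mulfI Dn0).
    have h : forall (r : Inp c -> Outp n d'.+2 -> R), cond_distr r ->
        (forall y, mu r a s y = mu r a s 0) -> (d'.+2)%:R * mu r a s 0 = 1.
      move=> r [_ S1] ur; rewrite -[RHS](S1 s) -(sum_mu r a s) (eq_bigr _ (fun y _ => ur y)).
      by rewrite sumr_const card_ord mulr_natl.
    by rewrite (h _ cp (up s)) (h _ cq (uq s)).
  rewrite negb_exists => /forallP H.
  pose i0 : 'I_n := Ordinal n0.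
  have Hc : forall j, a j = a i0.
    move=> j; have := H j; rewrite negb_exists => /forallP/(_ i0).
    by rewrite negbK => /eqP.
  by rewrite (mu_const _ _ cp spp Hc) (mu_const _ _ cq spq Hc).
have rp := recover m0 pr (proj2 cp s); have rq := recover m0 pr (proj2 cq s).
have : p s m0 * ((d'.+2 ^ n.+1)%:R - (d'.+2 ^ n)%:R) =
       q s m0 * ((d'.+2 ^ n.+1)%:R - (d'.+2 ^ n)%:R) :> R.
  apply: (addrI (d'.+2 ^ n)%:R); rewrite -rp -rq; congr (_ * _).
  by apply: eq_bigr => a _; rewrite mueq.
apply: mulIf; rewrite subr_eq0 eqr_nat expnS.
by rewrite neq_ltn ltn_Pmull ?orbT // expn_gt0.
Qed.


Definition ones (n d' : nat) : Outp n d'.+2 := [ffun _ => 1].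

Lemma dot_ones (n d' : nat) (a : Outp n d'.+2) : dot a (ones n d') = sumZ a.
Proof. by apply: eq_bigr => i _; rewrite ffunE mulr1. Qed.

Definition pstar (R : realType) (n d' : nat) (c : 'I_n -> nat) (f : Inp c -> 'I_d'.+2)
  (s : Inp c) (m : Outp n d'.+2) : R :=
  (sumZ m == f s)%:R / (d'.+2 ^ n.-1)%:R.

Lemma count_sum (R : realType) (n d' : nat) (t : 'I_d'.+2) :
  (0 < n)%N -> prime d'.+2 ->
  \sum_(m : Outp n d'.+2) ((sumZ m == t)%:R : R) = (d'.+2 ^ n.-1)%:R.
Proof.
move=> n0 pr.
have Dn0 : (d'.+2)%:R != 0 :> R by rewrite pnatr_eq0.
apply: (mulfI Dn0).
rewrite (eq_bigr (fun m => ((dot m (ones n d') == t)%:R : R))); last first.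
  by move=> m _; rewrite dot_ones.
rewrite (@count_fiber R n d' predT (ones n d') (Ordinal n0) t pr) //.
  by rewrite sum_one -natrM -expnS prednK.
by rewrite ffunE oner_neq0.
Qed.

Lemma pstar_NS (R : realType) (n d' : nat) (c : 'I_n -> nat) (f : Inp c -> 'I_d'.+2) :
  (0 < n)%N -> prime d'.+2 -> in_NS (pstar R f).
Proof.
move=> n0 pr.
have X0 : (d'.+2 ^ n.-1)%:R != 0 :> R by rewrite pnatr_eq0 expn_eq0.
split; first split.
- by move=> s m; rewrite /pstar divr_ge0 ?ler0n.
- by move=> s; rewrite /pstar -mulr_suml count_sum // divff.
move=> J s s' E m.
case: (set_0Vmem J) => [J0|[k kJ]].
  have -> : s = s' by apply/ffunP=> i; apply: E; rewrite J0 inE.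
  by [].
rewrite /pstar -!mulr_suml; congr (_ * _).
rewrite !(big_mkcond (fun m' : Outp n d'.+2 => [forall j, (j \notin J) ==> (m' j == m j)])) /=.
have E2 : forall t, \sum_(m' : Outp n d'.+2) (if [forall j, (j \notin J) ==> (m' j == m j)]
      then ((sumZ m' == t)%:R : R) else 0) =
    \sum_(m' : Outp n d'.+2 | [forall j, (j \notin J) ==> (m' j == m j)])
      ((dot m' (ones n d') == t)%:R : R).
  move=> t; rewrite [RHS]big_mkcond; apply: eq_bigr => m' _; by rewrite dot_ones.
rewrite !E2.
apply: (@fiber R n d' _ (ones n d') k) => //; first by rewrite ffunE oner_neq0.
move=> a u; apply: eq_forallb => j; rewrite !ffunE.
case: (eqVneq j k) => [->|jk]; first by rewrite kJ.
by rewrite addr0.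
Qed.

Lemma pstar_supp (R : realType) (n d' : nat) (c : 'I_n -> nat) (f : Inp c -> 'I_d'.+2) :
  supp_ok (pstar R f) f.
Proof. by move=> s m /negbTE h; rewrite /pstar h mul0r. Qed.

Unset Implicit Arguments. Set Strict Implicit.

Theorem proposition2p3p2 (R : realType) (n d : nat) (c : 'I_n -> nat)
  (f : Inp c -> 'I_d) :
  (2 <= n)%N -> prime d -> ~ bipartite_linear f ->
  exists p : Inp c -> Outp n d -> R,
    [/\ in_NS p, produces p (delta_corr R f),
        (forall q : Inp c -> Outp n d -> R,
           in_NS q -> produces q (delta_corr R f) -> forall s m, q s m = p s m)
      & vertex_NS p].
Proof.
move=> n2; case: d f => [|[|d']] f pr nb //.
have n0 : (0 < n)%N by apply: leq_trans n2.
have NSs := pstar_NS R f n0 pr.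
have prs : produces (pstar R f) (delta_corr R f).
  apply: prod_of_supp; [exact: (proj1 NSs) | exact: pstar_supp].
have U : forall q : Inp c -> Outp n d'.+2 -> R,
    in_NS q -> produces q (delta_corr R f) -> forall s m, q s m = pstar R f s m.
  move=> q Nq pq s m; exact: (uniq_NS n0 pr nb Nq pq NSs prs).
exists (pstar R f); split => //; split => // q1 q2 t N1 N2 /andP[t0 t1] E.
have key : forall (q : Inp c -> Outp n d'.+2 -> R) (q' : Inp c -> Outp n d'.+2 -> R) (t : R),
    in_NS q -> in_NS q' -> 0 < t -> 0 < 1 - t ->
    (forall s m, pstar R f s m = t * q s m + (1 - t) * q' s m) ->
    forall s m, q s m = pstar R f s m.
  move=> q q' r Nq Nq' r0 r1 Eq.
  case: (Nq) => [[pq _] _]; case: (Nq') => [[pq' _] _].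
  have sq : supp_ok q f.
    move=> s m sm; have := @pstar_supp R n d' c f s m sm; rewrite Eq => /eqP.
    rewrite paddr_eq0 ?mulr_ge0 ?(ltW r0) ?(ltW r1) ?pq ?pq' //.
    by case/andP; rewrite mulf_eq0 (gt_eqF r0) => /eqP.
  apply: U => //; apply: prod_of_supp => //; exact: (proj1 Nq).
move=> s m.
rewrite (key q1 q2 t) //; last by rewrite subr_gt0.
rewrite (key q2 q1 (1 - t)) //.
- by rewrite subr_gt0.
- by rewrite opprB addrC subrK.
move=> s' m'; rewrite E; ring.
Qed.
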